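(* Let $S\subset\mathbb{R}^n$ and $U_0\subset\mathbb{R}^{n\times n}$ be polyhedra and let $A_\star\in U_0$. If one-step safe learning is possible, then it is possible with at most $n$ measurements (i.e., with $m\le n$ in the definition below).
   Context: System: $x_{t+1}=A_\star x_t$ with $A_\star$ unknown, $A_\star\in U_0$. Given measurements $(x_j,y_j)$, $j=1,\dots,k$, with $y_j=A_\star x_j$, let $U_k=\{A\in U_0\mid Ax_j=y_j,\ j=1,\dots,k\}$. One-step safe learning is possible if for some nonnegative integer $m$ one can sequentially choose vectors $x_k\in S$, $k=1,\dots,m$ (each choice may depend on previous observations), observing $y_k=A_\star x_k$ after each choice, such that (1) for $k=1,\dots,m$, $Ax_k\in S$ for all $A\in U_{k-1}$, and (2) $U_m$ is a singleton. *)

(* Defs.v *)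
From mathcomp Require Import all_boot all_order all_algebra.
From mathcomp Require Import reals.
Set Implicit Arguments. Unset Strict Implicit. Unset Printing Implicit Defensive.
Import Order.TTheory GRing.Theory Num.Theory.
Local Open Scope ring_scope.

Section SafeLearning.
Variable R : realType.

(* Vectors of R^n are column vectors 'cV_n = 'M_(n,1). *)
Definition is_polyhedron (p q : nat) (P : 'M[R]_(p, q) -> Prop) : Prop :=
  exists (k : nat) (C : 'I_k -> 'M[R]_(p, q)) (d : 'I_k -> R),
    forall A, P A <-> (forall i : 'I_k, \sum_(j < p) \sum_(l < q) C i j l * A j l <= d i).

Definition history (n : nat) := seq ('cV[R]_n * 'cV[R]_n).

Definition consistent (n : nat) (U0 : 'M[R]_n -> Prop) (h : history n) (A : 'M[R]_n) : Prop :=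
  U0 A /\ (forall xy, xy \in h -> A *m xy.1 = xy.2).

Definition strategy (n : nat) := history n -> 'cV[R]_n.

Fixpoint run (n : nat) (strat : strategy n) (Astar : 'M[R]_n) (k : nat) : history n :=
  match k with
  | 0 => [::]
  | k'.+1 => let h := run strat Astar k' in
             let x := strat h in rcons h (x, Astar *m x)
  end.

Definition safe_learning_with (n : nat) (S : 'cV[R]_n -> Prop) (U0 : 'M[R]_n -> Prop)
    (Astar : 'M[R]_n) (m : nat) : Prop :=
  exists strat : strategy n,
    (forall k : nat, (k < m)%N ->
        S (strat (run strat Astar k)) /\
        (forall A, consistent U0 (run strat Astar k) A ->
                   S (A *m strat (run strat Astar k)))) /\
    (exists A0 : 'M[R]_n, forall A, consistent U0 (run strat Astar m) A <-> A = A0).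

Definition safe_learning_possible (n : nat) (S : 'cV[R]_n -> Prop) (U0 : 'M[R]_n -> Prop)
    (Astar : 'M[R]_n) : Prop :=
  exists m : nat, safe_learning_with S U0 Astar m.

End SafeLearning.

(* Main.v *)
Require Import Defs.
From mathcomp Require Import all_boot all_order all_algebra.
From mathcomp Require Import reals.
Set Implicit Arguments. Unset Strict Implicit. Unset Printing Implicit Defensive.
Import Order.TTheory GRing.Theory Num.Theory.
Local Open Scope ring_scope.

Lemma iotaS_r k : iota 0 k.+1 = rcons (iota 0 k) k.
Proof. by rewrite -cats1 -[k.+1]addn1 iotaD. Qed.

Section Aux.
Variable R : realType.
Variable n : nat.
Implicit Types (L : seq 'cV[R]_n) (A B : 'M[R]_n).

Definition agree A B L := forall v, v \in L -> A *m v = B *m v.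

Lemma agree_span A B L v : agree A B L -> v \in <<L>>%VS -> A *m v = B *m v.
Proof.
move=> HL Hv.
pose f := linfun (mulmx (A - B) : 'cV[R]_n -> 'cV[R]_n).
have sub : (<<L>> <= lker f)%VS.
  apply/span_subvP => w Hw; rewrite memv_ker lfunE /= mulmxBl subr_eq0.
  by apply/eqP; apply: HL.
move/subvP: sub => sub; have := sub v Hv; rewrite memv_ker lfunE /= mulmxBl subr_eq0.
by move/eqP.
Qed.

Lemma agree_eq_span A B L1 L2 : (<<L1>> = <<L2>>)%VS -> agree A B L1 -> agree A B L2.
Proof.
move=> E H v Hv; apply: (agree_span H); rewrite E; exact: memv_span.
Qed.

Lemma span_rcons L x : (<<rcons L x>> = <[x]> + <<L>>)%VS.
Proof. by rewrite -span_cons; apply: eq_span => y; rewrite mem_rcons. Qed.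

Lemma free_rcons L x : x \notin <<L>>%VS -> free L -> free (rcons L x).
Proof.
move=> Hx HL; have P : perm_eq (rcons L x) (x :: L) by rewrite perm_rcons perm_refl.
by rewrite (perm_free P) free_cons Hx.
Qed.

Lemma free_size L : free L -> (size L <= n)%N.
Proof.
move/eqP=> <-.
have := dimvS (subvf <<L>>%VS); rewrite dimvf => H.
apply: (leq_trans H). by rewrite dim_matrix mulr1.
Qed.


Fixpoint kept (g : nat -> 'cV[R]_n) (k : nat) : seq 'cV[R]_n :=
  match k with
  | 0 => [::]
  | k'.+1 => if g k' \in <<kept g k'>>%VS then kept g k' else rcons (kept g k') (g k')
  end.

Lemma span_kept g k : (<<kept g k>> = <<map g (iota 0 k)>>)%VS.
Proof.
elim: k => [//|k IH]; rewrite [kept _ _.+1]/=.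
have E := iotaS_r k.
rewrite E map_rcons span_rcons.
case: ifP => Hin.
  by rewrite -IH; apply/esym/addv_idPr; rewrite -memvE.
by rewrite span_rcons IH.
Qed.

Lemma free_kept g k : free (kept g k).
Proof.
elim: k => [|k IH] /=.
  by rewrite /free span_nil dimv0.
case: ifP => Hin //; apply: free_rcons => //; by rewrite Hin.
Qed.

Lemma kept_prefix g k j : (j < size (kept g k))%N ->
  exists k', [/\ (k' < k)%N, nth 0 (kept g k) j = g k' & take j (kept g k) = kept g k'].
Proof.
elim: k => [//|k IH]; rewrite [kept _ _.+1]/=.
move: IH; set K := kept g k; move=> IH.
case: ifP => Hin.
  move=> /IH [k' [H1 H2 H3]]; exists k'; split; [exact: ltnW | exact: H2 | exact: H3].
rewrite size_rcons ltnS leq_eqVlt => /orP [/eqP Ej | Hj].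
  exists k; split; first exact: ltnSn.
    rewrite nth_rcons Ej ltnn eqxx; reflexivity.
  rewrite Ej -cats1 (take_size_cat _ (erefl (size K))); reflexivity.
have [k' [H1 H2 H3]] := IH Hj; exists k'; split.
- exact: ltnW.
- rewrite nth_rcons Hj; exact: H2.
- rewrite -cats1 takel_cat; [exact: H3 | exact: ltnW].
Qed.

Lemma run_eq (strat : strategy R n) B k :
  run strat B k = map (fun v => (v, B *m v)) (map (fun i => strat (run strat B i)) (iota 0 k)).
Proof.
elim: k => [//|k IH]; rewrite [run _ _ _.+1]/=.
have E := iotaS_r k.
by rewrite E !map_rcons -IH.
Qed.

Lemma size_run (strat : strategy R n) B k : size (run strat B k) = k.
Proof. by elim: k => [//|k IH] /=; rewrite size_rcons IH. Qed.

Lemma consistent_map (U0 : 'M[R]_n -> Prop) B L A :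
  consistent U0 (map (fun v => (v, B *m v)) L) A <-> U0 A /\ agree A B L.
Proof.
split.
  case=> HU H; split=> // v Hv; exact: (H (v, B *m v) (map_f _ Hv)).
case=> HU H; split=> // xy /mapP [v Hv ->]; exact: H.
Qed.

End Aux.

Theorem corollary8 (R : realType) (n : nat)
    (S : 'cV[R]_n -> Prop) (U0 : 'M[R]_n -> Prop) (Astar : 'M[R]_n) :
  is_polyhedron S -> is_polyhedron U0 -> U0 Astar ->
  safe_learning_possible S U0 Astar ->
  exists m : nat, (m <= n)%N /\ safe_learning_with S U0 Astar m.
Proof.
move=> _ _ _ [m [strat [H1 [A0 H2]]]].
pose g i := strat (run strat Astar i).
pose K := kept g m.
pose strat' : strategy R n := fun h => nth 0 K (size h).
have g'E : forall i, strat' (run strat' Astar i) = nth 0 K i.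
  by move=> i; rewrite /strat' size_run.
have runE : forall j, (j <= size K)%N ->
    run strat' Astar j = map (fun v => (v, Astar *m v)) (take j K).
  move=> j Hj; rewrite run_eq; congr map.
  rewrite -(map_nth_iota0 0 Hj); apply: eq_map => i; exact: g'E.
have agreeE : forall A k, agree A Astar (kept g k) <-> agree A Astar (map g (iota 0 k)).
  move=> A k; split; apply: agree_eq_span; by rewrite span_kept.
exists (size K); split; first exact: (free_size (free_kept g m)).
exists strat'; split.
  move=> j Hj; rewrite g'E.
  have [k' [Hk' Hn Ht]] := kept_prefix Hj.
  rewrite Hn; have [HS HA] := H1 k' Hk'; split; first exact: HS.
  move=> A; rewrite (runE j (ltnW Hj)) Ht => /consistent_map [HU Hag].
  apply: HA; rewrite run_eq; apply/consistent_map; split; first exact: HU.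
  exact/agreeE.
exists A0 => A; rewrite (runE _ (leqnn _)) take_size -H2 run_eq.
rewrite !consistent_map; split; case=> HU Hag; (split; first exact: HU); exact/agreeE.
Qed.
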